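(* Let $K=2$ and let $(X_{t,1},X_{t,2})$ have joint density $p_{\mathcal{X}}$ on $\mathbb{R}^{2d}$ satisfying the relaxed symmetry condition with constant $\nu$. Then for every fixed vector $\beta\in\mathbb{R}^d$, $$\sum_{i=1}^2\mathbb{E}_{\mathcal{X}_t}\Big[X_{t,i}X_{t,i}^\top\mathbb{1}\{X_{t,i}=\arg\max_{X\in\mathcal{X}_t}X^\top\beta\}\Big]\succcurlyeq\nu^{-1}\Sigma,$$ where $\Sigma=\frac12\mathbb{E}[X_{t,1}X_{t,1}^\top+X_{t,2}X_{t,2}^\top]$.
   Context: $\mathcal{X}_t=\{X_{t,1},X_{t,2}\}\subset\mathbb{R}^d$, features bounded ($\|X_{t,i}\|_2\le x_{\max}$). Relaxed symmetry: there is $\nu<\infty$ with $p_{\mathcal{X}}(-\mathbf{x})/p_{\mathcal{X}}(\mathbf{x})\le\nu$ for all $\mathbf{x}\in\mathbb{R}^{2d}$. $\succcurlyeq$ is the Loewner (positive semidefinite) order. *)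

(* Defs.v *)
From HB Require Import structures.
From mathcomp Require Import all_boot all_order all_algebra.
From mathcomp Require Import all_classical all_reals all_analysis.
Set Implicit Arguments. Unset Strict Implicit. Unset Printing Implicit Defensive.
Import Order.TTheory GRing.Theory Num.Theory.
Local Open Scope ring_scope.

Section Defs.
Variable R : realType.

(* Lebesgue integral over R^n (points = n-tuples), written as the iterated
   one-dimensional Lebesgue integral (Fubini/Tonelli). *)
Fixpoint tint (n : nat) : (n.-tuple R -> \bar R) -> \bar R :=
  match n return (n.-tuple R -> \bar R) -> \bar R with
  | 0 => fun f => f [tuple]
  | m.+1 => fun f =>
      (\int[@lebesgue_measure R]_x tint (fun t : m.-tuple R => f [tuple of x :: t]))%E
  end.

Definition int2 (d : nat) (g : d.-tuple R * d.-tuple R -> \bar R) : \bar R :=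
  tint (fun x1 => tint (fun x2 => g (x1, x2))).

Definition Ep (d : nat) (p : d.-tuple R * d.-tuple R -> R)
  (g : d.-tuple R * d.-tuple R -> R) : R :=
  fine (int2 (fun z => (g z * p z)%:E)).

Definition dotv (d : nat) (x y : d.-tuple R) : R := \sum_(j < d) tnth x j * tnth y j.
Definition normv (d : nat) (x : d.-tuple R) : R := Num.sqrt (dotv x x).
Definition negv (d : nat) (x : d.-tuple R) : d.-tuple R := map_tuple (fun a => - a) x.

Definition psd (d : nat) (A : 'M[R]_d) : Prop :=
  forall v : 'cV[R]_d, 0 <= (v^T *m A *m v) 0 0.
Definition loewner_ge (d : nat) (A B : 'M[R]_d) : Prop := psd (A - B).

End Defs.

(* Main.v *)
Require Import Defs.
From HB Require Import structures.
From mathcomp Require Import all_boot all_order all_algebra.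
From mathcomp Require Import all_classical all_reals all_analysis.
From mathcomp Require Import measurable_realfun.
From mathcomp Require Import ring lra.
Import Order.TTheory GRing.Theory Num.Theory.
Set Implicit Arguments. Unset Strict Implicit. Unset Printing Implicit Defensive.
Local Open Scope ring_scope.

Section T.
Variable R : realType.
Local Notation mu := (@lebesgue_measure R).

Lemma tint0E (f : 0.-tuple R -> \bar R) : tint f = f [tuple].
Proof. by []. Qed.

Lemma tintSE n (f : n.+1.-tuple R -> \bar R) :
  tint f = (\int[mu]_x tint (fun t : n.-tuple R => f [tuple of x :: t]))%E.
Proof. by []. Qed.

Lemma tint_ge0 n (f : n.-tuple R -> \bar R) : (forall t, 0 <= f t)%E -> (0 <= tint f)%E.
Proof.
elim: n f => [|n IH] f f0; first by rewrite tint0E.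
rewrite tintSE; apply: integral_ge0 => x _; exact: IH.
Qed.

Lemma fubini_meas d' (T : measurableType d') (G : T * R -> \bar R) :
  measurable_fun setT G -> (forall z, (0 <= G z)%E) ->
  measurable_fun setT (fun x => \int[mu]_y G (x, y))%E.
Proof. move=> mG G0; exact: (measurable_fun_fubini_tonelli_F (m2:=mu) G mG G0). Qed.

Lemma fubini_meas_pos d' (T : measurableType d') (G : T * R -> \bar R) :
  measurable_fun setT G ->
  measurable_fun setT (fun x => \int[mu]_y (fun y => G (x, y))^\+ y)%E.
Proof.
move=> mG.
have -> : (fun x => \int[mu]_y (fun y => G (x, y))^\+ y)%E =
          (fun x => \int[mu]_y (G^\+)%E (x, y))%E.
  by apply/funext => x; apply: eq_integral => y _; rewrite !funeposE.
apply: fubini_meas; first exact: measurable_funepos.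
by move=> z; exact: funepos_ge0.
Qed.

Lemma fubini_meas_neg d' (T : measurableType d') (G : T * R -> \bar R) :
  measurable_fun setT G ->
  measurable_fun setT (fun x => \int[mu]_y (fun y => G (x, y))^\- y)%E.
Proof.
move=> mG.
have -> : (fun x => \int[mu]_y (fun y => G (x, y))^\- y)%E =
          (fun x => \int[mu]_y (G^\-)%E (x, y))%E.
  by apply/funext => x; apply: eq_integral => y _; rewrite !funenegE.
apply: fubini_meas; first exact: measurable_funeneg.
by move=> z; exact: funeneg_ge0.
Qed.

Definition tpart n d' (T : measurableType d') (F : T * n.-tuple R -> R) : T -> \bar R :=
  fun x => tint (fun t => (F (x, t))%:E).

Lemma tint_meas n : forall (d' : measure_display) (T : measurableType d')
  (F : T * n.-tuple R -> R), measurable_fun setT F ->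
  measurable_fun setT (tpart F).
Proof.
rewrite /tpart.
elim: n => [|n IH] d' T F mF.
  rewrite /=. apply/measurable_EFinP.
  apply: (measurableT_comp mF).
  exact: measurable_fun_pair.
pose G : T * R -> \bar R := fun xy => tint (fun t : n.-tuple R => (F (xy.1, [tuple of xy.2 :: t]))%:E).
have mG : measurable_fun setT G.
  apply: (IH _ _ (fun z : (T * R) * n.-tuple R => F (z.1.1, [tuple of z.1.2 :: z.2]))).
  apply: (measurableT_comp mF).
  apply: measurable_fun_pair.
    exact: (measurableT_comp measurable_fst measurable_fst).
  apply: measurable_cons.
    exact: (measurableT_comp measurable_snd measurable_fst).
  exact: measurable_snd.
rewrite [X in measurable_fun _ X](_ : _ = fun x => (\int[mu]_y G (x, y))%E); last first.
  by apply/funext => x.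
under eq_fun do rewrite integralE.
apply: emeasurable_funB.
  exact: fubini_meas_pos.
exact: fubini_meas_neg.
Qed.


Lemma tint_cst0 n : tint (fun _ : n.-tuple R => 0%E) = 0%E.
Proof.
elim: n => [|n IH] //; rewrite tintSE.
under eq_integral do rewrite IH.
exact: integral0.
Qed.

Lemma cons_meas n (f : n.+1.-tuple R -> R) (x : R) : measurable_fun setT f ->
  measurable_fun setT (fun t : n.-tuple R => f [tuple of x :: t]).
Proof.
move=> mf; apply: (measurableT_comp mf).
apply: measurable_cons => //; exact: measurable_cst.
Qed.

Lemma tint_cons_meas n (f : n.+1.-tuple R -> R) : measurable_fun setT f ->
  measurable_fun setT (fun x : R => tint (fun t : n.-tuple R => (f [tuple of x :: t])%:E)).
Proof.
move=> mf.
apply: (tint_meas (F := fun z : R * n.-tuple R => f [tuple of z.1 :: z.2])).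
apply: (measurableT_comp mf).
apply: measurable_cons; [exact: measurable_fst | exact: measurable_snd].
Qed.

Lemma tintD n (f g : n.-tuple R -> R) : measurable_fun setT f -> measurable_fun setT g ->
  (forall t, 0 <= f t) -> (forall t, 0 <= g t) ->
  tint (fun t => (f t + g t)%:E) = (tint (fun t => (f t)%:E) + tint (fun t => (g t)%:E))%E.
Proof.
elim: n f g => [|n IH] f g mf mg f0 g0; first by rewrite !tint0E.
rewrite !tintSE.
under eq_integral => x _ do rewrite (IH (fun t => f [tuple of x :: t]) (fun t => g [tuple of x :: t]) (cons_meas x mf) (cons_meas x mg)) //.
apply: ge0_integralD => //.
- by move=> x _; apply: tint_ge0 => t; rewrite lee_fin.
- exact: tint_cons_meas.
- by move=> x _; apply: tint_ge0 => t; rewrite lee_fin.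
- exact: tint_cons_meas.
Qed.

Lemma tintZ n (c : R) (f : n.-tuple R -> R) : measurable_fun setT f -> 0 <= c ->
  (forall t, 0 <= f t) ->
  tint (fun t => (c * f t)%:E) = (c%:E * tint (fun t => (f t)%:E))%E.
Proof.
elim: n f => [|n IH] f mf c0 f0; first by rewrite !tint0E.
rewrite !tintSE.
under eq_integral => x _ do rewrite (IH (fun t => f [tuple of x :: t]) (cons_meas x mf)) //.
apply: ge0_integralZl_EFin => //.
- by move=> x _; apply: tint_ge0 => t; rewrite lee_fin.
- exact: tint_cons_meas.
Qed.

Lemma tint_le n (f g : n.-tuple R -> R) : measurable_fun setT f -> measurable_fun setT g ->
  (forall t, 0 <= f t) -> (forall t, f t <= g t) ->
  (tint (fun t => (f t)%:E) <= tint (fun t => (g t)%:E))%E.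
Proof.
elim: n f g => [|n IH] f g mf mg f0 fg; first by rewrite !tint0E lee_fin.
rewrite !tintSE.
apply: ge0_le_integral => //.
- by move=> x _; apply: tint_ge0 => t; rewrite lee_fin.
- exact: tint_cons_meas.
- exact: tint_cons_meas.
- move=> x _; apply: IH => //; exact: cons_meas.
Qed.


Lemma posnegD (T : Type) (f : T -> R) t : `|f t| = f^\+ t + f^\- t.
Proof. by have := congr1 (fun h => h t) (funrposDneg f). Qed.

Lemma posnegB (T : Type) (f : T -> R) t : f t = f^\+ t - f^\- t.
Proof. by have := congr1 (fun h => h t) (funrposBneg f). Qed.

Lemma tint_abs n (f : n.-tuple R -> R) : measurable_fun setT f ->
  tint (fun t => `|f t|%:E) =
    (tint (fun t => (f^\+ t)%:E) + tint (fun t => (f^\- t)%:E))%E.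
Proof.
move=> mf.
rewrite -tintD //; [|exact: measurable_funrpos|exact: measurable_funrneg].
by congr tint; apply/funext => t; rewrite posnegD.
Qed.

Lemma tint_signed n (f : n.-tuple R -> R) : measurable_fun setT f ->
  (tint (fun t => `|f t|%:E) < +oo)%E ->
  tint (fun t => (f t)%:E) = (tint (fun t => (f^\+ t)%:E) - tint (fun t => (f^\- t)%:E))%E.
Proof.
elim: n f => [|n IH] f mf fint.
  by rewrite !tint0E -EFinB -posnegB.
have mfp := measurable_funrpos mf; have mfn := measurable_funrneg mf.
have hab : tint (fun t => `|f t|%:E) =
    (tint (fun t => (f^\+ t)%:E) + tint (fun t => (f^\- t)%:E))%E.
  exact: tint_abs.
have Pge0 : (0 <= tint (fun t => (f^\+ t)%:E))%E.
  by apply: tint_ge0 => t; rewrite lee_fin funrpos_ge0.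
have Nge0 : (0 <= tint (fun t => (f^\- t)%:E))%E.
  by apply: tint_ge0 => t; rewrite lee_fin funrneg_ge0.
have Pfin : (tint (fun t => (f^\+ t)%:E) < +oo)%E.
  apply: le_lt_trans fint; rewrite hab; exact: leeDl.
have Nfin : (tint (fun t => (f^\- t)%:E) < +oo)%E.
  apply: le_lt_trans fint; rewrite hab; exact: leeDr.
move: Pfin Nfin; rewrite !tintSE => Pfin Nfin.
set P := fun x : R => tint (fun t : n.-tuple R => (f^\+ [tuple of x :: t])%:E).
set N := fun x : R => tint (fun t : n.-tuple R => (f^\- [tuple of x :: t])%:E).
have mP : measurable_fun setT P by exact: tint_cons_meas.
have mN : measurable_fun setT N by exact: tint_cons_meas.
have P0 x : (0 <= P x)%E by apply: tint_ge0 => t; rewrite lee_fin funrpos_ge0.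
have N0 x : (0 <= N x)%E by apply: tint_ge0 => t; rewrite lee_fin funrneg_ge0.
have iP : mu.-integrable setT P.
  apply/integrableP; split => //.
  by under eq_integral do rewrite gee0_abs//.
have iN : mu.-integrable setT N.
  apply/integrableP; split => //.
  by under eq_integral do rewrite gee0_abs//.
rewrite -integralB //.
apply: ae_eq_integral => //.
- exact: tint_cons_meas.
- exact: emeasurable_funB.
have := integrable_ae measurableT iP; have := integrable_ae measurableT iN.
apply: filterS2 => x Nx Px _.
have Nxf := Nx I; have Pxf := Px I.
rewrite /= (IH (fun t => f [tuple of x :: t])) //; first exact: cons_meas.
rewrite (tint_abs (f := fun t => f [tuple of x :: t])); last exact: cons_meas.
by rewrite lte_add_pinfty // ?ltey_eq ?Nxf ?Pxf.
Qed.


Lemma integral_oppr (K : R -> \bar R) : measurable_fun setT K -> (forall x, (0 <= K x)%E) ->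
  (\int[mu]_x K (- x)%R = \int[mu]_x K x)%E.
Proof.
move=> mK K0.
have mN : measurable_fun setT (-%R : measurableTypeR R -> measurableTypeR R) by exact: oppr_measurable.
have mK' : measurable_fun (setT : set (measurableTypeR R)) K by exact: mK.
have := ge0_integral_pushforward mN mu (D := setT) measurableT mK' (fun y _ => K0 y).
rewrite preimage_setT => <-.
apply: eq_measure_integral => A mA _.
exact: lebesgue_measureN.
Qed.

Lemma negv_cons n (x : R) (t : n.-tuple R) :
  negv [tuple of x :: t] = [tuple of - x :: negv t].
Proof. by apply: val_inj. Qed.

Lemma tint_neg n (f : n.-tuple R -> R) : measurable_fun setT f -> (forall t, 0 <= f t) ->
  tint (fun t => (f (negv t))%:E) = tint (fun t => (f t)%:E).
Proof.
elim: n f => [|n IH] f mf f0.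
  by rewrite !tint0E; congr (_%:E); congr f; apply: tuple0.
have E (x : R) : tint (fun t => (f (negv [tuple of x :: t]))%:E) =
    tint (fun t => (f [tuple of - x :: t])%:E).
  rewrite -(IH (fun u => f [tuple of - x :: u])) //; last exact: cons_meas.
  by congr tint; apply/funext => t; rewrite negv_cons.
rewrite !tintSE.
transitivity (\int[mu]_x tint (fun t => (f [tuple of - x :: t])%:E))%E.
  by apply: eq_integral => x _; exact: E.
apply: (integral_oppr (K := fun x => tint (fun t => (f [tuple of x :: t])%:E))).
  exact: tint_cons_meas.
by move=> x; apply: tint_ge0 => t; rewrite lee_fin.
Qed.


Lemma size_take_nm n m (t : (n + m).-tuple R) : size (take n t) == n.
Proof. by rewrite size_takel // size_tuple leq_addr. Qed.

Lemma size_drop_nm n m (t : (n + m).-tuple R) : size (drop n t) == m.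
Proof. by rewrite size_drop size_tuple addKn. Qed.

Definition tsplit n m (t : (n + m).-tuple R) : n.-tuple R * m.-tuple R :=
  (Tuple (size_take_nm t), Tuple (size_drop_nm t)).

Lemma tsplit_cons n m (y : R) (t : (n + m).-tuple R) :
  tsplit (n := n.+1) (m := m) [tuple of y :: t] =
  ([tuple of y :: (tsplit t).1], (tsplit t).2).
Proof. by congr pair; apply: val_inj. Qed.

Lemma tint_split n m (G : n.-tuple R * m.-tuple R -> \bar R) :
  tint (fun x1 => tint (fun x2 => G (x1, x2))) =
  tint (fun t : (n + m).-tuple R => G (tsplit t)).
Proof.
elim: n G => [|n IH] G.
  rewrite tint0E; congr tint; apply/funext => t; congr G.
  by congr pair; [apply/esym/tuple0 | apply: val_inj; rewrite /= drop0].
rewrite tintSE.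
have E (y : R) : tint (fun x1 : n.-tuple R => tint (fun x2 => G ([tuple of y :: x1], x2))) =
   tint (fun t : (n + m).-tuple R => G (tsplit (n := n.+1) (m := m) [tuple of y :: t])).
  rewrite (IH (fun z => G ([tuple of y :: z.1], z.2))).
  by congr tint; apply/funext => t; rewrite tsplit_cons.
transitivity (\int[mu]_y tint (fun t : (n + m).-tuple R => G (tsplit (n := n.+1) (m := m) [tuple of y :: t])))%E.
  by apply: eq_integral => y _; exact: E.
by [].
Qed.


Lemma meas_abs d (T : measurableType d) (f : T -> R) : measurable_fun setT f ->
  measurable_fun setT (fun t => `|f t|).
Proof. by move=> mf; apply: measurableT_comp => //. Qed.

Definition Ig n (f : n.-tuple R -> R) : R := fine (tint (fun t => (f t)%:E)).
Definition NF n (f : n.-tuple R -> R) : Prop :=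
  [/\ measurable_fun setT f, (forall t, 0 <= f t) & (tint (fun t => (f t)%:E) < +oo)%E].
Definition Intg n (f : n.-tuple R -> R) : Prop :=
  measurable_fun setT f /\ (tint (fun t => `|f t|%:E) < +oo)%E.

Section funct.
Variable n : nat.
Implicit Types f g u v : n.-tuple R -> R.

Lemma Ig_ext f g : (forall t, f t = g t) -> Ig f = Ig g.
Proof. by move=> fg; rewrite /Ig; congr (fine (tint _)); apply/funext => t; rewrite fg. Qed.

Lemma NF_fin u : NF u -> tint (fun t => (u t)%:E) = (Ig u)%:E.
Proof.
case=> mu u0 ufin; rewrite /Ig fineK // ge0_fin_numE //.
by apply: tint_ge0 => t; rewrite lee_fin.
Qed.

Lemma Ig_ge0 u : (forall t, 0 <= u t) -> 0 <= Ig u.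
Proof. by move=> u0; apply: fine_ge0; apply: tint_ge0 => t; rewrite lee_fin. Qed.

Lemma NF_le u v : measurable_fun setT u -> (forall t, 0 <= u t) ->
  (forall t, u t <= v t) -> NF v -> NF u.
Proof.
move=> mu u0 uv [mv v0 vfin]; split => //.
by apply: le_lt_trans vfin; apply: tint_le.
Qed.

Lemma Ig_le_NF u v : measurable_fun setT u -> (forall t, 0 <= u t) ->
  (forall t, u t <= v t) -> NF v -> Ig u <= Ig v.
Proof.
move=> mu u0 uv Nv.
have Nu := NF_le mu u0 uv Nv.
rewrite -lee_fin -NF_fin // -NF_fin //.
by case: Nv => mv _ _; apply: tint_le.
Qed.

Lemma NFD u v : NF u -> NF v -> NF (fun t => u t + v t).
Proof.
move=> [mu u0 uf] [mv v0 vf]; split.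
- exact: measurable_funD.
- by move=> t; rewrite addr_ge0.
- by rewrite tintD // lte_add_pinfty.
Qed.

Lemma IgD_NF u v : NF u -> NF v -> Ig (fun t => u t + v t) = Ig u + Ig v.
Proof.
move=> Nu Nv; have Nuv := NFD Nu Nv.
apply: EFin_inj; rewrite -NF_fin // EFinD -!NF_fin //.
by case: Nu Nv => mu u0 _ [mv v0 _]; rewrite tintD.
Qed.

Lemma NFZ c u : 0 <= c -> NF u -> NF (fun t => c * u t).
Proof.
move=> c0 [mu u0 uf]; split.
- exact: measurable_funM.
- by move=> t; rewrite mulr_ge0.
- by rewrite tintZ // lte_mul_pinfty.
Qed.

Lemma IgZ_NF c u : 0 <= c -> NF u -> Ig (fun t => c * u t) = c * Ig u.
Proof.
move=> c0 Nu; have Ncu := NFZ c0 Nu.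
apply: EFin_inj; rewrite -NF_fin // EFinM -!NF_fin //.
by case: Nu => mu u0 _; rewrite tintZ.
Qed.

Lemma Intg_pos f : Intg f -> NF f^\+.
Proof.
move=> [mf ff]; apply: (@NF_le _ (fun t => `|f t|)).
- exact: measurable_funrpos.
- by move=> t; exact: funrpos_ge0.
- by move=> t; rewrite posnegD lerDl funrneg_ge0.
- split => //; first exact: meas_abs.
Qed.

Lemma Intg_neg f : Intg f -> NF f^\-.
Proof.
move=> [mf ff]; apply: (@NF_le _ (fun t => `|f t|)).
- exact: measurable_funrneg.
- by move=> t; exact: funrneg_ge0.
- by move=> t; rewrite posnegD lerDr funrpos_ge0.
- split => //; first exact: meas_abs.
Qed.

Lemma Ig_signed f : Intg f -> Ig f = Ig f^\+ - Ig f^\-.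
Proof.
move=> If; have [mf ff] := If.
rewrite /Ig tint_signed // fineB //.
- by rewrite NF_fin //; exact: Intg_pos.
- by rewrite NF_fin //; exact: Intg_neg.
Qed.

Lemma Intg_NF f : measurable_fun setT f -> NF (fun t => `|f t|) -> Intg f.
Proof. by move=> mf [_ _ ff]; split. Qed.

Lemma Intg_dom f v : measurable_fun setT f -> NF v -> (forall t, `|f t| <= v t) -> Intg f.
Proof.
move=> mf Nv fv; apply: Intg_NF => //; apply: NF_le fv Nv => //.
exact: meas_abs.
Qed.

Lemma IntgD f g : Intg f -> Intg g -> Intg (fun t => f t + g t).
Proof.
move=> [mf ff] [mg gf].
apply: (@Intg_dom _ (fun t => `|f t| + `|g t|)).
- exact: measurable_funD.
- apply: NFD; split => //; exact: meas_abs.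
- by move=> t; exact: ler_normD.
Qed.

Lemma IntgZ c f : Intg f -> Intg (fun t => c * f t).
Proof.
move=> [mf ff].
apply: (@Intg_dom _ (fun t => `|c| * `|f t|)).
- exact: measurable_funM.
- apply: NFZ => //; split => //; exact: meas_abs.
- by move=> t; rewrite normrM.
Qed.

Lemma IgD f g : Intg f -> Intg g -> Ig (fun t => f t + g t) = Ig f + Ig g.
Proof.
move=> If Ig_; have Ih := IntgD If Ig_.
pose h := fun t => f t + g t.
have E : Ig (fun t => h^\+ t + f^\- t + g^\- t) = Ig (fun t => h^\- t + f^\+ t + g^\+ t).
  apply: Ig_ext => t.
  have := posnegB h t; have := posnegB f t; have := posnegB g t; rewrite /h /=.
  lra.
rewrite (Ig_signed Ih) (Ig_signed If) (Ig_signed Ig_).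
move: E; rewrite /h.
rewrite !IgD_NF; try solve [exact: Intg_pos | exact: Intg_neg | apply: NFD; solve [exact: Intg_pos | exact: Intg_neg]].
lra.
Qed.

Lemma IgZ c f : Intg f -> Ig (fun t => c * f t) = c * Ig f.
Proof.
move=> If; have Icf := IntgZ c If.
rewrite (Ig_signed Icf) (Ig_signed If).
have [c0|c0] := leP 0 c.
  rewrite (ge0_funrposM f c0) (ge0_funrnegM f c0) !IgZ_NF //; try solve [exact: Intg_neg|exact: Intg_pos].
  by rewrite mulrBr.
have c0' : c <= 0 by exact: ltW.
rewrite (le0_funrposM f c0') (le0_funrnegM f c0') !IgZ_NF //; try solve [exact: Intg_neg|exact: Intg_pos|by rewrite oppr_ge0].
lra.
Qed.

Lemma Intg0 : Intg (fun _ : n.-tuple R => 0).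
Proof.
split; first exact: measurable_cst.
rewrite (_ : (fun _ => `|0|%:E) = (fun _ => 0%E)); last by apply/funext => t; rewrite normr0.
by rewrite tint_cst0.
Qed.

Lemma Ig0 : Ig (fun _ : n.-tuple R => 0) = 0.
Proof. by rewrite /Ig tint_cst0. Qed.

Lemma Ig_sum (I : Type) (s : seq I) (F : I -> n.-tuple R -> R) :
  (forall i, Intg (F i)) ->
  Intg (fun t => \sum_(i <- s) F i t) /\ Ig (fun t => \sum_(i <- s) F i t) = \sum_(i <- s) Ig (F i).
Proof.
move=> IF; elim: s => [|i s [IH1 IH2]].
  have -> : (fun t => \sum_(i <- [::]) F i t) = (fun _ => 0).
    by apply/funext => t; rewrite big_nil.
  by rewrite big_nil; split; [exact: Intg0 | exact: Ig0].
have E : (fun t => \sum_(j <- i :: s) F j t) = (fun t => F i t + \sum_(j <- s) F j t).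
  by apply/funext => t; rewrite big_cons.
rewrite E big_cons; split; first exact: IntgD.
by rewrite IgD // IH2.
Qed.

Lemma Ig_le f g : Intg f -> Intg g -> (forall t, f t <= g t) -> Ig f <= Ig g.
Proof.
move=> If Ig_ fg.
have Im := IntgZ (-1) If.
have : 0 <= Ig (fun t => g t + (-1) * f t).
  by apply: Ig_ge0 => t; rewrite mulN1r subr_ge0.
rewrite IgD // IgZ //; lra.
Qed.

End funct.

End T.

Section M.
Variable R : realType.

Lemma tsplit1_tnth n m (t : (n + m).-tuple R) (i : 'I_n) :
  tnth (tsplit t).1 i = tnth t (lshift m i).
Proof. by rewrite /tsplit /= !(tnth_nth 0) /= nth_take. Qed.

Lemma tsplit2_tnth n m (t : (n + m).-tuple R) (i : 'I_m) :
  tnth (tsplit t).2 i = tnth t (rshift n i).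
Proof. by rewrite /tsplit /= !(tnth_nth 0) /= nth_drop. Qed.

Lemma tsplit_meas n m : measurable_fun setT (@tsplit R n m).
Proof.
apply: measurable_fun_pair.
  apply/measurable_fun_tnthP => i.
  rewrite (_ : _ \o _ = fun t => tnth t (lshift m i)); last first.
    by apply/funext => t /=; rewrite tsplit1_tnth.
  exact: measurable_tnth.
apply/measurable_fun_tnthP => i.
rewrite (_ : _ \o _ = fun t => tnth t (rshift n i)); last first.
  by apply/funext => t /=; rewrite tsplit2_tnth.
exact: measurable_tnth.
Qed.

Lemma tsplit_negv n m (t : (n + m).-tuple R) :
  tsplit (negv t) = (negv (tsplit t).1, negv (tsplit t).2).
Proof. by congr pair; apply: val_inj; rewrite /= ?map_take ?map_drop. Qed.

Lemma negvK n (x : n.-tuple R) : negv (negv x) = x.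
Proof. by apply: val_inj; rewrite /= -map_comp map_id_in // => a _ /=; rewrite opprK. Qed.

Lemma dotv_negv n (x y : n.-tuple R) : dotv (negv x) y = - dotv x y.
Proof.
rewrite /dotv -sumrN; apply: eq_bigr => j _.
by rewrite /negv tnth_map mulNr.
Qed.

Lemma coord_le_norm n (x : n.-tuple R) j : `|tnth x j| <= normv x.
Proof.
rewrite /normv -sqrtr_sqr; apply: ler_wsqrtr.
rewrite /dotv (bigD1 j) //= -expr2 lerDl.
by apply: sumr_ge0 => i _; rewrite -expr2 sqr_ge0.
Qed.

Lemma sq_sum n (v x : 'I_n -> R) :
  \sum_j \sum_k (v j * v k) * (x j * x k) = (\sum_j v j * x j) ^+ 2.
Proof.
rewrite expr2 mulr_suml; apply: eq_bigr => j _.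
rewrite mulr_sumr; apply: eq_bigr => k _; ring.
Qed.

Lemma qform n (A : 'M[R]_n) (v : 'cV[R]_n) :
  (v^T *m A *m v) 0 0 = \sum_j \sum_k (v j 0 * v k 0) * A j k.
Proof.
rewrite mxE exchange_big /=; apply: eq_bigr => k _.
rewrite mxE mulr_suml; apply: eq_bigr => j _.
by rewrite mxE; ring.
Qed.


Lemma Ep_Ig d (p g : d.-tuple R * d.-tuple R -> R) :
  Ep p g = Ig (fun t : (d + d).-tuple R => g (tsplit t) * p (tsplit t)).
Proof. by rewrite /Ep /int2 /Ig (@tint_split R d d (fun z => (g z * p z)%:E)). Qed.

Lemma comb n c w (f g h : n.-tuple R -> R) : Intg f -> Intg g -> Intg h ->
  c * ((Ig f + Ig g) - w * (2^-1 * Ig h)) =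
  Ig (fun t => c * (f t + g t + (- (w * 2^-1)) * h t)).
Proof.
move=> If Ig_ Ih.
rewrite IgZ; last by apply: IntgD; [exact: IntgD | exact: IntgZ].
rewrite IgD; [|exact: IntgD|exact: IntgZ].
rewrite IgD // IgZ //; ring.
Qed.

Lemma comb_Intg n c w (f g h : n.-tuple R -> R) : Intg f -> Intg g -> Intg h ->
  Intg (fun t => c * (f t + g t + (- (w * 2^-1)) * h t)).
Proof.
by move=> If Ig_ Ih; apply: IntgZ; apply: IntgD; [exact: IntgD | exact: IntgZ].
Qed.


Lemma Ig_sum_ord n d (F : 'I_d -> n.-tuple R -> R) : (forall i, Intg (F i)) ->
  Ig (fun t => \sum_i F i t) = \sum_i Ig (F i).
Proof. by move=> IF; exact: (proj2 (Ig_sum (index_enum 'I_d) IF)). Qed.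

Lemma Intg_sum_ord n d (F : 'I_d -> n.-tuple R -> R) : (forall i, Intg (F i)) ->
  Intg (fun t => \sum_i F i t).
Proof. by move=> IF; exact: (proj1 (Ig_sum (index_enum 'I_d) IF)). Qed.

Lemma Intg_ext n (f g : n.-tuple R -> R) : (forall t, f t = g t) -> Intg f -> Intg g.
Proof. by move=> fg; rewrite (_ : f = g) //; apply/funext. Qed.

Lemma NF_Intg n (f : n.-tuple R -> R) : (forall t, 0 <= f t) -> Intg f -> NF f.
Proof.
move=> f0 [mf ff]; split => //.
by rewrite (_ : (fun t => (f t)%:E) = (fun t => `|f t|%:E)) //; apply/funext => t; rewrite ger0_norm.
Qed.

Lemma negv_meas n : measurable_fun setT (@negv R n).
Proof.
apply/measurable_fun_tnthP => i.
rewrite (_ : _ \o _ = fun t => - tnth t i); last first.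
  by apply/funext => t /=; rewrite tnth_map.
apply: measurableT_comp => //; exact: measurable_tnth.
Qed.

Lemma Ig_negv n (f : n.-tuple R -> R) : measurable_fun setT f -> (forall t, 0 <= f t) ->
  Ig (fun t => f (negv t)) = Ig f.
Proof. by move=> mf f0; rewrite /Ig tint_neg. Qed.

Lemma sq_sum_mul n (v x : 'I_n -> R) (c : R) :
  (\sum_j v j * x j) ^+ 2 * c = \sum_j \sum_k (v j * v k) * (x j * x k * c).
Proof.
rewrite -sq_sum mulr_suml; apply: eq_bigr => j _.
rewrite mulr_suml; apply: eq_bigr => k _; ring.
Qed.

Lemma ring_aux (vj vk x1j x1k x2j x2k i1 i2 P w : R) :
  vj * vk * (x1j * x1k * i1 * P + x2j * x2k * i2 * P + w * ((x1j * x1k + x2j * x2k) * P)) =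
  vj * vk * (x1j * x1k * (i1 * P)) + vj * vk * (x2j * x2k * (i2 * P)) +
  w * (vj * vk * (x1j * x1k * (1 * P)) + vj * vk * (x2j * x2k * (1 * P))).
Proof. ring. Qed.

Lemma mul_aux (q i n P : R) : q * (i * (n * P)) = n * (q * (i * P)).
Proof. ring. Qed.

Lemma sum_negv n (v : 'cV[R]_n) (x : n.-tuple R) :
  \sum_j v j 0 * tnth (negv x) j = - \sum_j v j 0 * tnth x j.
Proof. by rewrite -sumrN; apply: eq_bigr => j _; rewrite tnth_map mulrN. Qed.

Lemma sq_lt1 (x : R) : 0 < x -> x < 1 -> x * x < 1.
Proof. move=> *; nra. Qed.

Lemma final_arith (A B C D S1 S2 nu w : R) : 0 <= A -> 0 <= C -> S1 <= A + B ->
  S2 <= C + D -> B <= nu * A -> D <= nu * C -> 1 <= nu -> 0 <= w -> w * nu = 2^-1 ->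
  0 <= A + C + - w * (S1 + S2).
Proof.
move=> hA hC hS1 hS2 hB hD hnu hw0 hwnu.
have hw12 : w <= 2^-1 by rewrite -hwnu ler_peMr.
have hsum : S1 + S2 <= (1 + nu) * (A + C) by lra.
have f1 : w * (S1 + S2) <= w * ((1 + nu) * (A + C)) by rewrite ler_wpM2l.
have f2 : w * ((1 + nu) * (A + C)) = w * (A + C) + 2^-1 * (A + C).
  by rewrite -hwnu; ring.
have f3 : w * (A + C) <= 2^-1 * (A + C) by rewrite ler_wpM2r // addr_ge0.
lra.
Qed.

Lemma sum4 n (a b c e : 'I_n -> 'I_n -> R) (w : R) :
  \sum_j \sum_k a j k + \sum_j \sum_k b j k + w * (\sum_j \sum_k c j k + \sum_j \sum_k e j k) =
  \sum_j \sum_k (a j k + b j k + w * (c j k + e j k)).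
Proof.
rewrite mulrDr !mulr_sumr -!big_split /=; apply: eq_bigr => j _.
rewrite !mulr_sumr -!big_split /=; apply: eq_bigr => k _.
by rewrite mulrDr addrA.
Qed.

End M.

Unset Implicit Arguments.
Unset Strict Implicit.

Theorem lemma2 (R : realType) (d : nat) (xmax nu : R)
  (p : d.-tuple R * d.-tuple R -> R)
  (p_ge0 : forall z, 0 <= p z)
  (p_meas : measurable_fun setT p)
  (p_int1 : int2 (fun z => (p z)%:E) = 1%E)
  (p_bounded : forall z, p z != 0 -> normv z.1 <= xmax /\ normv z.2 <= xmax)
  (nu_gt0 : 0 < nu)
  (p_sym : forall z, p (negv z.1, negv z.2) <= nu * p z)
  (beta : d.-tuple R) :
  let Sigma : 'M[R]_d := \matrix_(j, k)
      (2^-1 * Ep p (fun z => tnth z.1 j * tnth z.1 k + tnth z.2 j * tnth z.2 k)) in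
  let M : 'M[R]_d := \matrix_(j, k)
      (Ep p (fun z => tnth z.1 j * tnth z.1 k
                      * (if dotv z.2 beta <= dotv z.1 beta then 1 else 0))
     + Ep p (fun z => tnth z.2 j * tnth z.2 k
                      * (if dotv z.1 beta <= dotv z.2 beta then 1 else 0))) in
  loewner_ge M (nu^-1 *: Sigma).
Proof.
move=> Sigma M; rewrite /loewner_ge /psd => v.
rewrite qform /M /Sigma.
under eq_bigr => j _ do under eq_bigr => k _ do rewrite !mxE !Ep_Ig.
have mS : measurable_fun setT (@tsplit R d d) by exact: tsplit_meas.
have mP : measurable_fun setT (fun t : (d + d).-tuple R => p (tsplit t)).
  exact: (measurableT_comp p_meas mS).
have P0 t : 0 <= p (tsplit (n:=d) (m:=d) t) by [].
have mX1 j : measurable_fun setT (fun t : (d + d).-tuple R => tnth (tsplit t).1 j).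
  apply: (measurableT_comp (measurable_tnth j)).
  exact: (measurableT_comp measurable_fst mS).
have mX2 j : measurable_fun setT (fun t : (d + d).-tuple R => tnth (tsplit t).2 j).
  apply: (measurableT_comp (measurable_tnth j)).
  exact: (measurableT_comp measurable_snd mS).
have md1 : measurable_fun setT (fun t : (d + d).-tuple R => dotv (tsplit t).1 beta).
  rewrite /dotv; apply: measurable_sum => j; apply: measurable_funM; [exact: mX1 | exact: measurable_cst].
have md2 : measurable_fun setT (fun t : (d + d).-tuple R => dotv (tsplit t).2 beta).
  rewrite /dotv; apply: measurable_sum => j; apply: measurable_funM; [exact: mX2 | exact: measurable_cst].
have mI1 : measurable_fun setT (fun t : (d + d).-tuple R =>
    if dotv (tsplit t).2 beta <= dotv (tsplit t).1 beta then (1:R) else 0).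
  apply: measurable_fun_ifT; [exact: measurable_fun_ler | exact: measurable_cst | exact: measurable_cst].
have mI2 : measurable_fun setT (fun t : (d + d).-tuple R =>
    if dotv (tsplit t).1 beta <= dotv (tsplit t).2 beta then (1:R) else 0).
  apply: measurable_fun_ifT; [exact: measurable_fun_ler | exact: measurable_cst | exact: measurable_cst].
have NP : NF (fun t : (d + d).-tuple R => p (tsplit t)).
  split => //.
  have e : int2 (fun z => (p z)%:E) = tint (fun t : (d + d).-tuple R => (p (tsplit t))%:E).
    exact: (@tint_split R d d (fun z => (p z)%:E)).
  by rewrite -e p_int1 ltry.
have bX1 t j : p (tsplit (n:=d) (m:=d) t) != 0 -> `|tnth (tsplit t).1 j| <= xmax.
  by move=> pz; case: (p_bounded _ pz) => h1 _; exact: le_trans (coord_le_norm _ _) h1.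
have bX2 t j : p (tsplit (n:=d) (m:=d) t) != 0 -> `|tnth (tsplit t).2 j| <= xmax.
  by move=> pz; case: (p_bounded _ pz) => _ h1; exact: le_trans (coord_le_norm _ _) h1.
have IntgXX (X : (d + d).-tuple R -> 'I_d -> R) (c : (d + d).-tuple R -> R) :
    (forall j, measurable_fun setT (fun t => X t j)) ->
    (forall t j, p (tsplit t) != 0 -> `|X t j| <= xmax) ->
    measurable_fun setT c -> (forall t, `|c t| <= 1) ->
    forall j k, Intg (fun t => X t j * X t k * c t * p (tsplit t)).
  move=> mX bX mc c1 j k.
  apply: (@Intg_dom _ _ _ (fun t => xmax ^+ 2 * p (tsplit t))).
  - apply: measurable_funM => //; apply: measurable_funM => //; exact: measurable_funM.
  - exact: NFZ (sqr_ge0 _) NP.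
  - move=> t; have [pz|pz] := eqVneq (p (tsplit t)) 0.
      by rewrite pz !mulr0 normr0.
    rewrite !normrM (ger0_norm (P0 t)) ler_wpM2r //.
    have h1 := bX t j pz; have h2 := bX t k pz; have h3 := c1 t.
    have h4 := normr_ge0 (X t j); have h5 := normr_ge0 (X t k); have h6 := normr_ge0 (c t).
    rewrite expr2; apply: (@le_trans _ _ (`|X t j| * `|X t k|)).
      by rewrite ler_piMr // mulr_ge0.
    by apply: ler_pM.
have IntgQ (X : (d + d).-tuple R -> 'I_d -> R) (c : (d + d).-tuple R -> R) :
    (forall j, measurable_fun setT (fun t => X t j)) ->
    (forall t j, p (tsplit t) != 0 -> `|X t j| <= xmax) ->
    measurable_fun setT c -> (forall t, `|c t| <= 1) ->
    Intg (fun t => (\sum_j v j 0 * X t j) ^+ 2 * (c t * p (tsplit t))).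
  move=> mX bX mc c1.
  apply: (@Intg_ext _ _ (fun t => \sum_j \sum_k (v j 0 * v k 0) * (X t j * X t k * c t * p (tsplit t)))).
    move=> t; rewrite (sq_sum_mul (fun j => v j 0) (fun j => X t j)).
    by apply: eq_bigr => j _; apply: eq_bigr => k _; ring.
  apply: Intg_sum_ord => j; apply: Intg_sum_ord => k; apply: IntgZ; exact: IntgXX.
have cI1 t : `|(if dotv (tsplit (n:=d) (m:=d) t).2 beta <= dotv (tsplit t).1 beta then (1:R) else 0)| <= 1.
  by case: ifP; rewrite ?normr1 ?normr0.
have cI2 t : `|(if dotv (tsplit (n:=d) (m:=d) t).1 beta <= dotv (tsplit t).2 beta then (1:R) else 0)| <= 1.
  by case: ifP; rewrite ?normr1 ?normr0.
have c1 (t : (d + d).-tuple R) : `|(1:R)| <= 1 by rewrite normr1.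
have m1 : measurable_fun setT (fun _ : (d + d).-tuple R => (1:R)) by exact: measurable_cst.
have IG1 j k : Intg (fun t : (d + d).-tuple R => tnth (tsplit t).1 j * tnth (tsplit t).1 k *
    (if dotv (tsplit t).2 beta <= dotv (tsplit t).1 beta then 1 else 0) * p (tsplit t)).
  exact: (IntgXX (fun t j => tnth (tsplit t).1 j) _ mX1 bX1 mI1 cI1 j k).
have IG2 j k : Intg (fun t : (d + d).-tuple R => tnth (tsplit t).2 j * tnth (tsplit t).2 k *
    (if dotv (tsplit t).1 beta <= dotv (tsplit t).2 beta then 1 else 0) * p (tsplit t)).
  exact: (IntgXX (fun t j => tnth (tsplit t).2 j) _ mX2 bX2 mI2 cI2 j k).
have IS j k : Intg (fun t : (d + d).-tuple R => (tnth (tsplit t).1 j * tnth (tsplit t).1 k +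
    tnth (tsplit t).2 j * tnth (tsplit t).2 k) * p (tsplit t)).
  apply: (@Intg_ext _ _ (fun t => tnth (tsplit t).1 j * tnth (tsplit t).1 k * 1 * p (tsplit t) +
     tnth (tsplit t).2 j * tnth (tsplit t).2 k * 1 * p (tsplit t))).
    by move=> t; ring.
  apply: IntgD.
    exact: (IntgXX (fun t j => tnth (tsplit t).1 j) _ mX1 bX1 m1 c1 j k).
  exact: (IntgXX (fun t j => tnth (tsplit t).2 j) _ mX2 bX2 m1 c1 j k).
under eq_bigr => j _ do under eq_bigr => k _ do rewrite (comb _ _ (IG1 j k) (IG2 j k) (IS j k)).
pose w := nu^-1 * 2^-1.
pose H (j k : 'I_d) (t : (d + d).-tuple R) := v j 0 * v k 0 *
  (tnth (tsplit t).1 j * tnth (tsplit t).1 k *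
    (if dotv (tsplit t).2 beta <= dotv (tsplit t).1 beta then 1 else 0) * p (tsplit t) +
   tnth (tsplit t).2 j * tnth (tsplit t).2 k *
    (if dotv (tsplit t).1 beta <= dotv (tsplit t).2 beta then 1 else 0) * p (tsplit t) +
   (- w) * ((tnth (tsplit t).1 j * tnth (tsplit t).1 k +
    tnth (tsplit t).2 j * tnth (tsplit t).2 k) * p (tsplit t))).
have IH j k : Intg (H j k) by exact: comb_Intg.
have IHj j : Intg (fun t => \sum_k H j k t) by exact: Intg_sum_ord.
have E : Ig (fun t => \sum_j \sum_k H j k t) = \sum_j \sum_k Ig (H j k).
  rewrite (Ig_sum_ord (F := fun j t => \sum_k H j k t)) //.
  by apply: eq_bigr => j _; rewrite (Ig_sum_ord (IH j)).
suff h : 0 <= Ig (fun t => \sum_j \sum_k H j k t).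
  by rewrite E in h; exact: h.
pose P := fun t : (d + d).-tuple R => p (tsplit t).
pose I1 := fun t : (d + d).-tuple R =>
  (if dotv (tsplit t).2 beta <= dotv (tsplit t).1 beta then (1:R) else 0).
pose I2 := fun t : (d + d).-tuple R =>
  (if dotv (tsplit t).1 beta <= dotv (tsplit t).2 beta then (1:R) else 0).
pose q1 := fun t : (d + d).-tuple R => (\sum_j v j 0 * tnth (tsplit t).1 j) ^+ 2.
pose q2 := fun t : (d + d).-tuple R => (\sum_j v j 0 * tnth (tsplit t).2 j) ^+ 2.
pose Af := fun t => q1 t * (I1 t * P t).
pose Bf := fun t => q1 t * (I2 t * P t).
pose Cf := fun t => q2 t * (I2 t * P t).
pose Df := fun t => q2 t * (I1 t * P t).
pose S1 := fun t => q1 t * (1 * P t).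
pose S2 := fun t => q2 t * (1 * P t).
have IA : Intg Af by exact: (IntgQ (fun t j => tnth (tsplit t).1 j) _ mX1 bX1 mI1 cI1).
have IB : Intg Bf by exact: (IntgQ (fun t j => tnth (tsplit t).1 j) _ mX1 bX1 mI2 cI2).
have IC : Intg Cf by exact: (IntgQ (fun t j => tnth (tsplit t).2 j) _ mX2 bX2 mI2 cI2).
have ID : Intg Df by exact: (IntgQ (fun t j => tnth (tsplit t).2 j) _ mX2 bX2 mI1 cI1).
have IS1 : Intg S1 by exact: (IntgQ (fun t j => tnth (tsplit t).1 j) _ mX1 bX1 m1 c1).
have IS2 : Intg S2 by exact: (IntgQ (fun t j => tnth (tsplit t).2 j) _ mX2 bX2 m1 c1).
have I10 t : 0 <= I1 t by rewrite /I1; case: ifP.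
have I20 t : 0 <= I2 t by rewrite /I2; case: ifP.
have q10 t : 0 <= q1 t by exact: sqr_ge0.
have q20 t : 0 <= q2 t by exact: sqr_ge0.
have Phi t : \sum_j \sum_k H j k t = Af t + Cf t + (- w) * (S1 t + S2 t).
  rewrite /Af /Cf /S1 /S2 /q1 /q2.
  rewrite (sq_sum_mul (fun j => v j 0) (fun j => tnth (tsplit t).1 j) (I1 t * P t)).
  rewrite (sq_sum_mul (fun j => v j 0) (fun j => tnth (tsplit t).2 j) (I2 t * P t)).
  rewrite (sq_sum_mul (fun j => v j 0) (fun j => tnth (tsplit t).1 j) (1 * P t)).
  rewrite (sq_sum_mul (fun j => v j 0) (fun j => tnth (tsplit t).2 j) (1 * P t)).
  rewrite sum4; apply: eq_bigr => j _; apply: eq_bigr => k _.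
  exact: ring_aux.
rewrite (Ig_ext Phi) (IgD (IntgD IA IC) (IntgZ _ (IntgD IS1 IS2))).
rewrite (IgD IA IC) (IgZ _ (IntgD IS1 IS2)) (IgD IS1 IS2).
have P0' t : 0 <= P t by exact: p_ge0.
have A0 t : 0 <= Af t by rewrite /Af mulr_ge0 // mulr_ge0.
have B0 t : 0 <= Bf t by rewrite /Bf mulr_ge0 // mulr_ge0.
have C0 t : 0 <= Cf t by rewrite /Cf mulr_ge0 // mulr_ge0.
have D0 t : 0 <= Df t by rewrite /Df mulr_ge0 // mulr_ge0.
have hA : 0 <= Ig Af by exact: Ig_ge0.
have hC : 0 <= Ig Cf by exact: Ig_ge0.
have hS1 : Ig S1 <= Ig Af + Ig Bf.
  rewrite -(IgD IA IB); apply: Ig_le => //; first exact: IntgD.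
  move=> t; rewrite /S1 /Af /Bf /I1 /I2.
  have hqP : 0 <= q1 t * P t by rewrite mulr_ge0.
  have := le_total (dotv (tsplit t).1 beta) (dotv (tsplit t).2 beta).
  case: ifP => h1; case: ifP => h2; rewrite ?mul1r ?mul0r ?mulr0 ?addr0 ?add0r //.
  by move=> _; rewrite lerDl.
have hS2 : Ig S2 <= Ig Cf + Ig Df.
  rewrite -(IgD IC ID); apply: Ig_le => //; first exact: IntgD.
  move=> t; rewrite /S2 /Cf /Df /I1 /I2.
  have hqP : 0 <= q2 t * P t by rewrite mulr_ge0.
  have := le_total (dotv (tsplit t).1 beta) (dotv (tsplit t).2 beta).
  case: ifP => h1; case: ifP => h2; rewrite ?mul1r ?mul0r ?mulr0 ?addr0 ?add0r //.
  by move=> _; rewrite lerDl.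
have hB : Ig Bf <= nu * Ig Af.
  rewrite -(Ig_negv IB.1 B0) -(IgZ _ IA).
  apply: Ig_le_NF.
  - apply: measurableT_comp; [exact: IB.1 | exact: negv_meas].
  - by move=> t; exact: B0.
  - move=> t; rewrite /Bf /Af /q1 /I2 /I1 /P tsplit_negv /= !dotv_negv lerN2 sum_negv sqrrN.
    have hs := p_sym (tsplit t).
    have q0 := q10 t; have i0 := I10 t; rewrite /q1 /I1 in q0 i0.
    apply: le_trans (ler_wpM2l q0 (ler_wpM2l i0 hs)) _.
    by rewrite [X in X <= _]mul_aux; exact: lexx.
  - exact: NFZ (ltW nu_gt0) (NF_Intg A0 IA).
have hD : Ig Df <= nu * Ig Cf.
  rewrite -(Ig_negv ID.1 D0) -(IgZ _ IC).
  apply: Ig_le_NF.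
  - apply: measurableT_comp; [exact: ID.1 | exact: negv_meas].
  - by move=> t; exact: D0.
  - move=> t; rewrite /Df /Cf /q2 /I2 /I1 /P tsplit_negv /= !dotv_negv lerN2 sum_negv sqrrN.
    have hs := p_sym (tsplit t).
    have q0 := q20 t; have i0 := I20 t; rewrite /q2 /I2 in q0 i0.
    apply: le_trans (ler_wpM2l q0 (ler_wpM2l i0 hs)) _.
    by rewrite [X in X <= _]mul_aux; exact: lexx.
  - exact: NFZ (ltW nu_gt0) (NF_Intg C0 IC).
have hnu : 1 <= nu.
  rewrite leNgt; apply/negP => nu1.
  have pz z : p z = 0.
    have h1 := p_sym z; have h2 := p_sym (negv z.1, negv z.2).
    rewrite /= !negvK -surjective_pairing in h2.
    have a0 := p_ge0 z.
    have h3 : p z <= nu * (nu * p z) := le_trans h2 (ler_wpM2l (ltW nu_gt0) h1).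
    apply/eqP; rewrite eq_le a0 andbT leNgt; apply/negP => pz0.
    have nn : nu * nu < 1 by exact: sq_lt1.
    have : nu * (nu * p z) < p z by rewrite mulrA gtr_pMl.
    by rewrite ltNge h3.
  have : int2 (fun z => (p z)%:E) = 0%E.
    rewrite (_ : (fun z => (p z)%:E) = (fun _ => 0%E)); last by apply/funext => z; rewrite pz.
    rewrite /int2 (_ : (fun x1 : d.-tuple R => tint (fun x2 : d.-tuple R => 0%E)) = fun _ => 0%E).
      exact: tint_cst0.
    by apply/funext => x1; exact: tint_cst0.
  by rewrite p_int1 => /eqP; rewrite eqe oner_eq0.
have hw0 : 0 <= w by rewrite /w mulr_ge0 // invr_ge0 ltW.
have hwnu : w * nu = 2^-1 by rewrite /w mulrAC mulVf ?mul1r // gt_eqF.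
exact: (final_arith hA hC hS1 hS2 hB hD hnu hw0 hwnu).
Qed.
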